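(* Let $\delta\in(0,1)$ and let $\hat r_i,b_i:\mathcal A\to\mathbb R$ ($i\in[m]$) be data-dependent functions such that $b$ is a bonus term for $\hat r$ at level $\delta$. Let $\pi^{\mathrm{out}}$ be the output of the surrogate-minimization procedure described in the context. Then, with probability at least $1-\delta$, for every Nash equilibrium $\pi^*$, $$\mathrm{Gap}(\pi^{\mathrm{out}})\le 2\max_{i\in[m]}\Big[\max_{a_i'\in\mathcal A_i}\mathbb E_{\bm a_{-i}\sim\pi^*_{-i}}\, b_i(a_i',\bm a_{-i})+\mathbb E_{\bm a\sim\pi^*}\, b_i(\bm a)\Big].$$
   Context: Congestion game setting. There are $m\ge 1$ players and a finite facility set $\mathcal F$ with $F=|\mathcal F|$. Each player $i\in[m]$ has a nonempty finite action set $\mathcal A_i\subseteq 2^{\mathcal F}$ (an action is a subset of facilities). The set of joint actions $\bm a=(a_1,\dots,a_m)$ is $\mathcal A=\prod_{i=1}^m\mathcal A_i$. For $f\in\mathcal F$ let $n^f(\bm a)=|\{i\in[m]: f\in a_i\}|$. For each facility $f$ and each $\ell\in\{1,\dots,m\}$ there is a reward distribution $R^f(\cdot\mid \ell)$ supported in $[-1,1]$ with mean $r^f(\ell)$. The mean reward of player $i$ under $\bm a$ is $r_i(\bm a)=\sum_{f\in a_i} r^f(n^f(\bm a))$. A product policy is $\pi=\pi_1\otimes\cdots\otimes\pi_m$ with $\pi_i\in\Delta(\mathcal A_i)$; $(\pi_i',\pi_{-i})$ denotes $\pi$ with the $i$-th component replaced by $\pi_i'$. Let $V_i^\pi=\mathbb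 E_{\bm a\sim\pi}[r_i(\bm a)]$ and $\mathrm{Gap}(\pi)=\max_{i\in[m]}\big[\max_{\pi_i'\in\Delta(\mathcal A_i)}V_i^{(\pi_i',\pi_{-i})}-V_i^{\pi}\big]$. A Nash equilibrium (NE) is a product policy $\pi$ with $\mathrm{Gap}(\pi)=0$. Offline data: a dataset $\mathcal D=\{(\bm a^k,\bm r^k)\}_{k=1}^n$ in which $\bm a^1,\dots,\bm a^n$ are i.i.d. draws from a fixed distribution $\rho\in\Delta(\mathcal A)$ and the reward information $\bm r^k$ is generated from the game given $\bm a^k$. Bonus term: functions $\hat r_i,b_i:\mathcal A\to\mathbb R$ (computed from $\mathcal D$) are such that $b$ is a bonus term for $\hat r$ at level $\delta$ if, with probability at least $1-\delta$, $|r_i(\bm a)-\hat r_i(\bm a)|\le b_i(\bm a)$ for all $i\in[m]$ and all $\bm a\in\mathcal A$. Surrogate minimization: for a product policy $\pi$ define $\overline V_i^{\pi}=\mathbb E_{\bm a\sim\pi}[\hat r_i(\bm a)+b_i(\bm a)]$, $\underline V_i^{\pi}=\mathbb E_{\bm a\sim\pi}[\hat r_i(\bm a)-b_i(\bm a)]$, and $\overline V_i^{\dagger,\pi_{-i}}=\max_{\pi_i'\in\Delta(\mathcal A_i)}\overline V_i^{(\pi_i',\pi_{-i})}$. The output is any $\pi^{\mathrm{out}}\in\arg\min_{\pi\text{ product}}\max_{i\in[m]}\big[\overline V_i^{\dagger,\pi_{-i}}-\underline V_i^{\pi}\big]$. *)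

(* Defs.v *)
From HB Require Import structures.
From mathcomp Require Import all_boot all_order all_algebra.
From mathcomp Require Import all_classical all_reals all_analysis.
Set Implicit Arguments. Unset Strict Implicit. Unset Printing Implicit Defensive.
Import Order.TTheory GRing.Theory Num.Theory.
Local Open Scope classical_set_scope.
Local Open Scope ring_scope.

Section CongestionGame.
Variables (R : realType) (m : nat) (F : finType).

(* A joint action: each player i picks a subset of facilities. *)
Definition joint := {ffun 'I_m -> {set F}}.

Definition load (f : F) (a : joint) : nat := #|[set i | f \in a i]|.

Definition mean_reward (rmean : F -> nat -> R) (i : 'I_m) (a : joint) : R :=
  \sum_(f in a i) rmean f (load f a).

Definition is_dist (A : {set {set F}}) (p : {set F} -> R) : Prop :=
  [/\ forall s, 0 <= p s, forall s, s \notin A -> p s = 0 & \sum_(s in A) p s = 1].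

Definition is_prod_policy (act : 'I_m -> {set {set F}}) (pi : 'I_m -> {set F} -> R) : Prop :=
  forall i, is_dist (act i) (pi i).

Definition Epol (pi : 'I_m -> {set F} -> R) (g : joint -> R) : R :=
  \sum_(a : joint) (\prod_(i < m) pi i (a i)) * g a.

Definition Eminus (pi : 'I_m -> {set F} -> R) (i : 'I_m) (ai : {set F}) (g : joint -> R) : R :=
  \sum_(a : joint | a i == ai) (\prod_(j < m | j != i) pi j (a j)) * g a.

Definition upd (pi : 'I_m -> {set F} -> R) (i : 'I_m) (p : {set F} -> R) : 'I_m -> {set F} -> R :=
  fun j => if j == i then p else pi j.

Definition best_resp (act : 'I_m -> {set {set F}}) (pi : 'I_m -> {set F} -> R)
  (i : 'I_m) (g : joint -> R) : R :=
  sup [set v | exists p, is_dist (act i) p /\ v = Epol (upd pi i p) g].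

Definition max_players (h : 'I_m -> R) : R := sup [set v | exists i, v = h i].

Definition Gap (act : 'I_m -> {set {set F}}) (rmean : F -> nat -> R)
  (pi : 'I_m -> {set F} -> R) : R :=
  max_players (fun i => best_resp act pi i (mean_reward rmean i)
                        - Epol pi (mean_reward rmean i)).

Definition is_NE act rmean pi : Prop := is_prod_policy act pi /\ Gap act rmean pi = 0.

Definition in_joint (act : 'I_m -> {set {set F}}) (a : joint) : Prop := forall i, a i \in act i.

Definition surrogate (act : 'I_m -> {set {set F}}) (rh b : 'I_m -> joint -> R)
  (pi : 'I_m -> {set F} -> R) : R :=
  max_players (fun i => best_resp act pi i (fun a => rh i a + b i a)
                        - Epol pi (fun a => rh i a - b i a)).

Definition is_surrogate_min act rh b pi : Prop :=
  is_prod_policy act pi /\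
  forall pi', is_prod_policy act pi' -> surrogate act rh b pi <= surrogate act rh b pi'.

Definition bonus_bound (act : 'I_m -> {set {set F}}) (b : 'I_m -> joint -> R)
  (pis : 'I_m -> {set F} -> R) : R :=
  max_players (fun i => sup [set v | exists ai, ai \in act i /\ v = Eminus pis i ai (b i)]
                        + Epol pis (b i)).

End CongestionGame.

Definition with_prob_at_least (R : realType) (d : measure_display) (T : measurableType d)
  (P : probability T R) (p : R) (Q : T -> Prop) : Prop :=
  exists S : set T, [/\ measurable S, (p%:E <= P S)%E & forall w, S w -> Q w].

Definition is_bonus (R : realType) (m : nat) (F : finType) (d : measure_display)
  (T : measurableType d) (P : probability T R)
  (act : 'I_m -> {set {set F}}) (rmean : F -> nat -> R)
  (rh b : T -> 'I_m -> joint m F -> R) (delta : R) : Prop :=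
  with_prob_at_least P (1 - delta) (fun w =>
    forall i (a : joint m F), in_joint act a ->
      `|mean_reward rmean i a - rh w i a| <= b w i a).

(* Main.v *)
Require Import Defs.
From HB Require Import structures.
From mathcomp Require Import all_boot all_order all_algebra.
From mathcomp Require Import all_classical all_reals all_analysis.
From mathcomp Require Import lra.
Import Order.TTheory GRing.Theory Num.Theory.
Local Open Scope classical_set_scope.
Local Open Scope ring_scope.
Set Implicit Arguments. Unset Strict Implicit.

Section Helpers.
Variables (R : realType) (m : nat) (F : finType).
Implicit Types (pi : 'I_m -> {set F} -> R) (g : joint m F -> R).

Lemma fin_ub (I : finType) (h : I -> R) i : h i <= \sum_j `|h j|.
Proof.
rewrite (bigD1 i) //=; apply: le_trans (ler_norm _) _.
by rewrite lerDl sumr_ge0.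
Qed.

Lemma sup_ge (E : set R) x : has_ubound E -> E x -> x <= sup E.
Proof. by move=> hb Ex; apply: ub_le_sup. Qed.

Lemma sup_le (E : set R) M : E !=set0 -> (forall x, E x -> x <= M) -> sup E <= M.
Proof. by move=> ne H; apply: ge_sup. Qed.

Lemma Epol_upd pi i p g :
  Epol (upd pi i p) g = \sum_(s : {set F}) p s * Eminus pi i s g.
Proof.
rewrite /Epol (partition_big (fun a : joint m F => a i) xpredT) //=.
apply: eq_bigr => s _; rewrite /Eminus mulr_sumr; apply: eq_bigr => a /eqP ai.
rewrite (bigD1 i) //= /upd eqxx ai mulrA; congr (_ * _ * _).
by apply: eq_bigr => j /negbTE ->.
Qed.

Lemma upd_id pi i g : Epol (upd pi i (pi i)) g = Epol pi g.
Proof.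
rewrite /Epol; apply: eq_bigr => a _; congr (_ * _); apply: eq_bigr => j _.
by rewrite /upd; case: eqP => // ->.
Qed.

Lemma dist_sum_le (A : {set {set F}}) (p : {set F} -> R) (c : {set F} -> R) M :
  is_dist A p -> (forall s, s \in A -> c s <= M) -> \sum_s p s * c s <= M.
Proof.
case=> p0 pout p1 cM.
rewrite (bigID (fun s => s \in A)) /= [X in _ + X]big1 ?addr0; last first.
  by move=> s /pout ->; rewrite mul0r.
apply: le_trans (_ : \sum_(s in A) p s * M <= M).
  by apply: ler_sum => s sA; rewrite ler_wpM2l // cM.
by rewrite -mulr_suml p1 mul1r.
Qed.

Lemma delta_dist (A : {set {set F}}) (s0 : {set F}) : s0 \in A -> is_dist A (fun s => if s == s0 then 1 else 0 : R).
Proof.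
move=> s0A; split.
- by move=> s; case: eqP.
- by move=> s sA; case: eqP => // e; rewrite e s0A in sA.
- by rewrite (bigD1 s0) //= eqxx big1 ?addr0 // => s /andP[_ /negbTE ->].
Qed.

Lemma delta_sum (s0 : {set F}) (c : {set F} -> R) :
  \sum_s (if s == s0 then 1 else 0) * c s = c s0.
Proof.
by rewrite (bigD1 s0) //= eqxx mul1r big1 ?addr0 // => s /negbTE ->; rewrite mul0r.
Qed.

Variable act : 'I_m -> {set {set F}}.

Lemma BR_ub pi i g : has_ubound [set v | exists p, is_dist (act i) p /\ v = Epol (upd pi i p) g].
Proof.
exists (\sum_s `|Eminus pi i s g|) => v [p [pd ->]].
by rewrite Epol_upd; apply: dist_sum_le pd _ => s _; apply: fin_ub.
Qed.

Lemma BR_ge pi i g p : is_dist (act i) p -> Epol (upd pi i p) g <= best_resp act pi i g.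
Proof. by move=> pd; apply: sup_ge; [apply: BR_ub| exists p]. Qed.

Lemma BR_le pi i g M : (0 < #|act i|)%N ->
  (forall p, is_dist (act i) p -> Epol (upd pi i p) g <= M) -> best_resp act pi i g <= M.
Proof.
move=> /card_gt0P[s0 s0A] H; apply: sup_le => [|v [p [pd ->]]]; last exact: H.
by exists (Epol (upd pi i (fun s => if s == s0 then 1 else 0)) g); exists (fun s => if s == s0 then 1 else 0); split => //; apply: delta_dist.
Qed.

Lemma MP_ub (h : 'I_m -> R) : has_ubound [set v | exists i, v = h i].
Proof. by exists (\sum_j `|h j|) => v [i ->]; apply: fin_ub. Qed.

Lemma MP_ge (h : 'I_m -> R) i : h i <= max_players h.
Proof. by apply: sup_ge; [apply: MP_ub | exists i]. Qed.

Lemma MP_le (h : 'I_m -> R) M : (0 < m)%N -> (forall i, h i <= M) -> max_players h <= M.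
Proof.
move=> m0 H; apply: sup_le => [|v [i ->]] //.
by exists (h (Ordinal m0)), (Ordinal m0).
Qed.

Lemma upd_prod pi i p : is_prod_policy act pi -> is_dist (act i) p ->
  is_prod_policy act (upd pi i p).
Proof. by move=> H pd j; rewrite /upd; case: eqP => [->|]. Qed.

Lemma Epol_mono pi g1 g2 : is_prod_policy act pi ->
  (forall a, in_joint act a -> g1 a <= g2 a) -> Epol pi g1 <= Epol pi g2.
Proof.
move=> pp H; apply: ler_sum => a _.
have w0 : 0 <= \prod_(i < m) pi i (a i).
  by apply: prodr_ge0 => i _; case: (pp i).
case: (boolP [forall j, a j \in act j]) => [/forallP aj|].
  by rewrite ler_wpM2l // H.
move=> /forallPn[j /= ajn].
have -> : \prod_(i < m) pi i (a i) = 0.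
  by rewrite (bigD1 j) //=; case: (pp j) => _ -> // _; rewrite mul0r.
by rewrite !mul0r.
Qed.

Lemma EpolD pi g1 g2 : Epol pi (fun a => g1 a + g2 a) = Epol pi g1 + Epol pi g2.
Proof. by rewrite /Epol -big_split; apply: eq_bigr => a _; rewrite mulrDr. Qed.

Lemma EpolB pi g1 g2 : Epol pi (fun a => g1 a - g2 a) = Epol pi g1 - Epol pi g2.
Proof.
by rewrite /Epol -sumrB; apply: eq_bigr => a _; rewrite mulrBr.
Qed.

Lemma EpolZ pi c g : Epol pi (fun a => c * g a) = c * Epol pi g.
Proof. by rewrite /Epol mulr_sumr; apply: eq_bigr => a _; rewrite mulrCA. Qed.

End Helpers.

Theorem theorem1 (R : realType) (m : nat) (F : finType)
  (act : 'I_m -> {set {set F}}) (rmean : F -> nat -> R)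
  (d : measure_display) (T : measurableType d) (P : probability T R)
  (delta : R) (rh b : T -> 'I_m -> joint m F -> R) :
  (0 < m)%N ->
  (forall i, (0 < #|act i|)%N) ->
  (forall f l, (1 <= l <= m)%N -> `|rmean f l| <= 1) ->
  0 < delta < 1 ->
  is_bonus P act rmean rh b delta ->
  with_prob_at_least P (1 - delta) (fun w =>
    forall piout, is_surrogate_min act (rh w) (b w) piout ->
    forall pis, is_NE act rmean pis ->
      Gap act rmean piout <= 2 * bonus_bound act (b w) pis).
Proof.
move=> m0 actne _ _ [S [mS PS HS]]; exists S; split => // w Sw piout [pop pmin] pis [psp gap0].
have H := HS w Sw.
pose r : 'I_m -> joint m F -> R := mean_reward rmean.
have H1 : forall i a, in_joint act a -> r i a <= rh w i a + b w i a.
  by move=> i a /(H i); rewrite ler_norml => /andP[h1 h2]; rewrite /r; lra.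
have H2 : forall i a, in_joint act a -> rh w i a - b w i a <= r i a.
  by move=> i a /(H i); rewrite ler_norml => /andP[h1 h2]; rewrite /r; lra.
have H3 : forall i a, in_joint act a -> rh w i a + b w i a <= r i a + 2 * b w i a.
  by move=> i a /(H i); rewrite ler_norml => /andP[h1 h2]; rewrite /r; lra.
have H4 : forall i a, in_joint act a -> r i a - 2 * b w i a <= rh w i a - b w i a.
  by move=> i a /(H i); rewrite ler_norml => /andP[h1 h2]; rewrite /r; lra.
have stepA : Gap act rmean piout <= surrogate act (rh w) (b w) piout.
  apply: MP_le => // i.
  apply: le_trans (MP_ge _ i).
  apply: lerB.
    apply: BR_le => // p pd.
    apply: le_trans (BR_ge _ _ pd).
    by apply: Epol_mono; [exact: upd_prod | exact: H1].
  by apply: Epol_mono => //; exact: H2.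
have stepB := pmin _ psp.
have stepC : surrogate act (rh w) (b w) pis <= 2 * bonus_bound act (b w) pis.
  apply: MP_le => // i.
  pose Mb := sup [set v | exists ai, ai \in act i /\ v = Eminus pis i ai (b w i)].
  have Eb : forall s, s \in act i -> Eminus pis i s (b w i) <= Mb.
    move=> s sA; apply: sup_ge; last by exists s.
    by exists (\sum_t `|Eminus pis i t (b w i)|) => v [t [_ ->]]; apply: fin_ub.
  have BRr : best_resp act pis i (r i) <= Epol pis (r i).
    have := MP_ge (fun i => best_resp act pis i (mean_reward rmean i)
                        - Epol pis (mean_reward rmean i)) i.
    by rewrite -/(Gap act rmean pis) gap0 subr_le0.
  have BRb : best_resp act pis i (fun a => rh w i a + b w i a) <= Epol pis (r i) + 2 * Mb.
    apply: BR_le => // p pd.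
    apply: le_trans (_ : Epol (upd pis i p) (fun a => r i a + 2 * b w i a) <= _).
      by apply: Epol_mono; [exact: upd_prod | exact: H3].
    rewrite EpolD EpolZ; apply: lerD; first exact: le_trans (BR_ge _ _ pd) BRr.
    rewrite ler_pM2l //; rewrite Epol_upd; exact: dist_sum_le pd Eb.
  have Elow : Epol pis (r i) - 2 * Epol pis (b w i) <= Epol pis (fun a => rh w i a - b w i a).
    rewrite -EpolZ -EpolB; apply: Epol_mono => //; exact: H4.
  have := MP_ge (fun i => sup [set v | exists ai, ai \in act i /\ v = Eminus pis i ai (b w i)]
                        + Epol pis (b w i)) i.
  rewrite -/(bonus_bound act (b w) pis) -/Mb => hB.
  apply: le_trans (_ : 2 * (Mb + Epol pis (b w i)) <= _); last by rewrite ler_pM2l.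
  lra.
by apply: le_trans stepA (le_trans stepB stepC).
Qed.
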